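(* Let $a,b$ be complex numbers of modulus one. There is no $6\times 6$ complex Hadamard matrix $H$ all of whose entries lie in $\{1,a,b\}$ which is complex equivalent to a matrix of the form $$H(\alpha,\beta)=\begin{bmatrix} 1&1&1&1&1&1\\ 1&1&1&-1&-1&-1\\ 1&\omega&\omega^2&\alpha&\alpha\omega&\alpha\omega^2\\ 1&\omega&\omega^2&-\alpha&-\alpha\omega&-\alpha\omega^2\\ 1&\omega^2&\omega&\beta&\beta\omega^2&\beta\omega\\ 1&\omega^2&\omega&-\beta&-\beta\omega^2&-\beta\omega \end{bmatrix},$$ where $\omega=e^{2\pi i/3}$ and $\alpha,\beta$ are complex numbers of modulus one.
   Context: A complex Hadamard matrix (CHM) of order $n$ is an $n\times n$ complex matrix $H$ all of whose entries have modulus one and which satisfies $HH^\dagger=nI$. A monomial unitary matrix is a unitary matrix each of whose rows and columns has exactly one nonzero entry, that entry having modulus one. Two $n\times n$ matrices $U,V$ are complex equivalent if $U=PVQ$ for some $n\times n$ monomial unitary matrices $P,Q$. *)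

(* Defs.v *)
From HB Require Import structures.
From mathcomp Require Import all_boot all_order all_algebra.
From mathcomp Require Import reals.
From mathcomp.real_closed Require Import complex.
Set Implicit Arguments. Unset Strict Implicit. Unset Printing Implicit Defensive.
Import Order.TTheory GRing.Theory Num.Theory.
Local Open Scope ring_scope.
Local Open Scope complex_scope.

Section Defs.
Variable C : numClosedFieldType.

Definition adjmx (m n : nat) (A : 'M[C]_(m, n)) : 'M[C]_(n, m) :=
  (map_mx Num.conj A)^T.

Definition unitary_mx (n : nat) (U : 'M[C]_n) : Prop :=
  U *m adjmx U = 1%:M.

Definition CHM (n : nat) (H : 'M[C]_n) : Prop :=
  (forall i j, `|H i j| = 1) /\ H *m adjmx H = n%:R%:M.

Definition monomial_unitary (n : nat) (P : 'M[C]_n) : Prop :=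
  unitary_mx P /\
  (forall i, #|[set j | P i j != 0]| = 1%N) /\
  (forall j, #|[set i | P i j != 0]| = 1%N) /\
  (forall i j, P i j != 0 -> `|P i j| = 1).

Definition complex_equiv (n : nat) (U V : 'M[C]_n) : Prop :=
  exists P Q : 'M[C]_n, monomial_unitary P /\ monomial_unitary Q /\
    U = P *m V *m Q.

Definition Hab (w al be : C) : 'M[C]_6 :=
  let rows : seq (seq C) :=
    [:: [:: 1; 1; 1; 1; 1; 1];
        [:: 1; 1; 1; -1; -1; -1];
        [:: 1; w; w^+2; al; al * w; al * w^+2];
        [:: 1; w; w^+2; - al; - (al * w); - (al * w^+2)];
        [:: 1; w^+2; w; be; be * w^+2; be * w];
        [:: 1; w^+2; w; - be; - (be * w^+2); - (be * w)]] in
  \matrix_(i < 6, j < 6) nth 0 (nth [::] rows i) j.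
End Defs.

(* omega = e^{2 pi i / 3} = -1/2 + i sqrt(3)/2 in R[i] *)
Definition omega (R : realType) : R[i] :=
  (- (1 / 2%:R)) +i* (Num.sqrt 3%:R / 2%:R).

(* Main.v *)
Require Import Defs.
From HB Require Import structures.
From mathcomp Require Import all_boot all_order all_algebra.
From mathcomp Require Import reals.
From mathcomp.real_closed Require Import complex.
From mathcomp Require Import ring lra.
Import Order.TTheory GRing.Theory Num.Theory.
Set Implicit Arguments. Unset Strict Implicit. Unset Printing Implicit Defensive.
Local Open Scope ring_scope.


Section Abs.
Variable F : numFieldType.
Variables a b : F.
Hypothesis ha : a != 0.
Hypothesis hb : b != 0.
Local Notation P v := (v \in [:: 1; a; b]).

Lemma Snz v : P v -> v != 0.
Proof. by rewrite !inE => /or3P[]/eqP->; rewrite ?oner_eq0. Qed.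

Lemma pig u v w s : P u -> P v -> P w -> P s -> u != v -> u != w -> v != w ->
  [\/ s = u, s = v | s = w].
Proof.
rewrite !inE => /or3P[]/eqP-> /or3P[]/eqP-> /or3P[]/eqP-> /or3P[]/eqP->;
rewrite ?eqxx //= => h1 h2 h3;
  first [by constructor 1 | by constructor 2 | by constructor 3].
Qed.

Lemma two_nz : (2 : F) != 0. Proof. by rewrite pnatr_eq0. Qed.

Lemma neqN (x : F) : x != 0 -> x != - x.
Proof.
move=> hx; apply/eqP => h; move: hx; have : 2 * x = 0 by rewrite mulr2n mulrDl mul1r {1}h addNr.
by move/eqP; rewrite mulf_eq0 (negbTE two_nz) /= => ->.
Qed.

End Abs.

Section W.
Variable F : numFieldType.
Variable w : F.
Hypothesis w3 : w ^+ 3 = 1.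
Hypothesis w1 : w != 1.

Lemma w_nz : w != 0.
Proof. by apply/eqP => h; move: w3; rewrite h expr0n /= => /eqP; rewrite eq_sym oner_eq0. Qed.

Lemma w2_n1 : w ^+ 2 != 1.
Proof.
apply/eqP => h; move/eqP: w1; apply; by rewrite -[w]mul1r -h -exprSr w3.
Qed.

Lemma w_nw2 : w != w ^+ 2.
Proof.
apply/eqP => h; move/eqP: w1; apply.
apply: (mulfI w_nz); by rewrite mulr1 [RHS]h expr2.
Qed.

Lemma w6 : w ^+ 6 = 1.
Proof. by rewrite (_ : 6 = 3 * 2)%N // exprM w3 expr1n. Qed.
End W.

Lemma canc (F : fieldType) (k m n l r : F) : k != 0 -> l = r -> k * m = l -> k * n = r -> m = n.
Proof. by move=> kn lr h1 h2; apply: (mulfI kn); rewrite h1 h2. Qed.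

Ltac cc k H := first [apply: (@canc _ k _ _ _ _ _ H); [|ring|ring]
  | apply: (@canc _ k _ _ _ _ _ (esym H)); [|ring|ring]];
  rewrite ?(expf_neq0, mulf_neq0, oppr_eq0) //.

Lemma c6 (F : fieldType) (c : F) : c ^+ 6 = 1 -> c ^+ 3 != 1 -> c ^+ 3 = -1.
Proof.
move=> h6 h3; have : (c^+3 - 1) * (c^+3 + 1) = 0.
  have -> : (c^+3 - 1) * (c^+3 + 1) = c^+6 - 1 by ring.
  by rewrite h6 subrr.
move/eqP; rewrite mulf_eq0 subr_eq0 (negbTE h3) /= addr_eq0 => /eqP //.
Qed.

Lemma c2 (F : fieldType) (c : F) : c != 1 -> c != -1 -> c ^+ 2 != 1.
Proof.
move=> h1 h2; apply/eqP => h; have : (c - 1) * (c + 1) = 0.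
  have -> : (c - 1) * (c + 1) = c^+2 - 1 by ring.
  by rewrite h subrr.
by move/eqP; rewrite mulf_eq0 subr_eq0 (negbTE h1) /= addr_eq0 (negbTE h2).
Qed.

Section Main.
Variable F : numFieldType.
Variables a b w : F.
Hypothesis ha : a != 0.
Hypothesis hb : b != 0.
Hypothesis w3 : w ^+ 3 = 1.
Hypothesis w1 : w != 1.
Local Notation P v := (v \in [:: 1; a; b]).
Local Notation Snz := (@Snz F a b ha hb).
Local Notation pig := (@pig F a b).


Lemma KnK (K : F) : K != 0 -> K = - K -> False.
Proof. by move=> kn h; move: (neqN kn); rewrite -h eqxx. Qed.

Lemma negsub x zi zo z2 K : P x -> P (-x) -> P zi -> P zo -> P z2 -> x != 0 ->
  zi != x -> zi != -x -> zo != zi -> zi ^+ 3 = K -> zo ^+ 3 = K -> z2 ^+ 3 = - K ->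
  K != 0 -> z2 = - zo.
Proof.
move=> Px Pnx Pzi Pzo Pz2 xn h1 h2 h3 ci co c2 Kn.
have d1 : x != - x by exact: neqN.
have d2 : x != zi by rewrite eq_sym.
have d3 : - x != zi by rewrite eq_sym.
have : zo = x \/ zo = - x.
  by case: (pig Px Pnx Pzi Pzo d1 d2 d3) => [->|->|h]; [left|right|rewrite h eqxx in h3].
have : z2 = x \/ z2 = - x.
  case: (pig Px Pnx Pzi Pz2 d1 d2 d3) => [->|->|h]; [by left|by right|].
  by exfalso; apply: (KnK Kn); rewrite -{1}ci -h c2.
case=> e2 [] e1; rewrite e1 e2 ?opprK //; exfalso; apply: (KnK Kn); by rewrite -{1}co -c2 e1 e2.
Qed.

Lemma geo c s e x x' : c != 0 -> c != 1 -> c != -1 -> e != 0 -> s != 0 ->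
  P e -> P (c*e) -> P (c^+2*e) -> P (s*x) -> P (s*w*x) -> P (s*w^+2*x') ->
  (x = e /\ x' = c*e) \/ (x = c*e /\ x' = e) -> c^+3 != 1 -> False.
Proof.
move=> cn c1 cm1 en sn Pe Pce Pc2e Pz0 Pz1 Pz2 hx c3.
have c2n := c2 c1 cm1.
have wn : w != 0 by apply: w_nz.
have w2n : w^+2 != 1 by apply: w2_n1.
have wnw2 : w != w^+2 by apply: w_nw2.
have d1 : e != c*e by apply/eqP => h; move/eqP: c1; apply; cc e h.
have d2 : e != c^+2*e by apply/eqP => h; move/eqP: c2n; apply; cc e h.
have d3 : c*e != c^+2*e by apply/eqP => h; move/eqP: c1; apply; cc (c*e) h.
have mem u : P u -> [\/ u = e, u = c*e | u = c^+2*e] by move=> Pu; exact: pig Pe Pce Pc2e Pu d1 d2 d3.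
have xn : x != 0 by case: hx => -[-> _] //; rewrite mulf_neq0.
have d01 : s*x != s*w*x by apply/eqP => h; move/eqP: w1; apply; cc (s*x) h.
have ce : (s*w*x)^+3 = (s*x)^+3.
  have -> : (s*w*x)^+3 = (s*x)^+3 * w^+3 by ring.
  by rewrite w3 mulr1.
have [c3m [z0E z1E]] : c^+3 = -1 /\ ((s*x = e \/ s*x = c^+2*e) /\ (s*w*x = e \/ s*w*x = c^+2*e)).
  case: (mem _ Pz0) => h0; case: (mem _ Pz1) => h1; rewrite h0 h1 in ce d01;
   try (by rewrite eqxx in d01);
   try (exfalso; move/eqP: c3; apply; first [cc (e^+3) ce | cc ((c*e)^+3) ce]);
   (have h6 : c^+6 = 1 by cc (e^+3) ce); do !split; first [exact: c6 | by left | by right].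
have z0c : (s*x)^+3 = e^+3.
  case: z0E => ->; first done.
  have -> : (c^+2*e)^+3 = (c^+3)^+2 * e^+3 by ring.
  by rewrite c3m; ring.
have z2c : (s*w^+2*x')^+3 = - e^+3.
  rewrite -z0c; case: hx => -[-> ->].
    have -> : (s*w^+2*(c*e))^+3 = (s*e)^+3 * (w^+3)^+2 * c^+3 by ring.
    by rewrite w3 c3m; ring.
  have -> : (s*w^+2*e)^+3 = (s*e)^+3 * (w^+3)^+2 by ring.
  have -> : (s*(c*e))^+3 = (s*e)^+3 * c^+3 by ring.
  by rewrite w3 c3m; ring.
have e3n : e^+3 != 0 by rewrite expf_neq0.
have hz2 : s*w^+2*x' = c*e.
  case: (mem _ Pz2) => // h; exfalso; apply: (KnK e3n); rewrite -z2c h //.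
  have -> : (c^+2*e)^+3 = (c^+3)^+2 * e^+3 by ring.
  by rewrite c3m; ring.
case: hx => -[ex ex']; rewrite ex in z0E z1E; rewrite ex' in hz2.
- have sw2 : s*w^+2 = 1 by cc (c*e) hz2.
  case: z0E => h0.
    have s1 : s = 1 by cc e h0.
    by move/eqP: w2n; apply; rewrite -sw2 s1 mul1r.
  case: z1E => h1.
    have H : s*w^+2 = s*w by rewrite sw2; cc e h1.
    by move/eqP: w1; apply; cc (s*w) H.
  have H : s*w*e = s*e by rewrite h0 h1.
  by move/eqP: w1; apply; cc (s*e) H.
- have sw2 : s*w^+2 = c by cc e hz2.
  case: z0E => h0; case: z1E => h1.
  + have H : s*w*(c*e) = s*(c*e) by rewrite h0 h1.
    by move/eqP: w1; apply; cc (s*(c*e)) H.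
  + have sc : s*c = 1 by cc e h0.
    have wc : w = c^+2.
      have H : s*w*(c*e) = c^+2*e by [].
      rewrite -[w]mul1r -sc; cc e H.
    move/eqP: cm1; apply; rewrite -c3m -{1}sw2 wc.
    have -> : s*(c^+2)^+2 = (s*c)*c^+3 by ring.
    by rewrite sc mul1r.
  + have sc : s = c by cc (c*e) h0.
    move/eqP: w2n; apply.
    have H : c*w^+2 = c by rewrite -{1}sc sw2.
    cc c H.
  + have H : s*w*(c*e) = s*(c*e) by rewrite h0 h1.
    by move/eqP: w1; apply; cc (s*(c*e)) H.
Qed.

Lemma L2 c s x x' : P x -> P x' -> P (c*x) -> P (c*x') -> P (s*x) -> P (s*w*x) ->
  P (s*w^+2*x') -> c^+3 = 1.
Proof.
move=> Px Px' Pcx Pcx' Pz0 Pz1 Pz2.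
have xn := Snz Px; have x'n := Snz Px'.
move: (Snz Pz0); rewrite mulf_eq0 negb_or => /andP[sn _].
move: (Snz Pcx); rewrite mulf_eq0 negb_or => /andP[cn _].
have wn : w != 0 by apply: w_nz.
have w2n : w^+2 != 1 by apply: w2_n1.
have wnw2 : w != w^+2 by apply: w_nw2.
case: (eqVneq (c^+3) 1) => // c3; exfalso.
have d01 : s*x != s*w*x by apply/eqP => h; move/eqP: w1; apply; cc (s*x) h.
case: (eqVneq x' x) => [ex|nx].
  rewrite ex in Pz2.
  have d02 : s*x != s*w^+2*x by apply/eqP => h; move/eqP: w2n; apply; cc (s*x) h.
  have d12 : s*w*x != s*w^+2*x by apply/eqP => h; move/eqP: wnw2; apply; cc (s*x) h.
  have cub u : P u -> u^+3 = (s*x)^+3.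
    move=> Pu; case: (pig Pz0 Pz1 Pz2 Pu d01 d02 d12) => -> //.
      have -> : (s*w*x)^+3 = (s*x)^+3*w^+3 by ring.
      by rewrite w3 mulr1.
    have -> : (s*w^+2*x)^+3 = (s*x)^+3*(w^+3)^+2 by ring.
    by rewrite w3 expr1n mulr1.
  move/eqP: c3; apply.
  have H : (c*x)^+3 = x^+3 by rewrite !cub.
  cc (x^+3) H.
case: (eqVneq c 1) => [c1'|cn1]; first by rewrite c1' expr1n eqxx in c3.
have ncx : c*x != x by apply/eqP => h; move/eqP: cn1; apply; cc x h.
have ncx' : c*x' != x' by apply/eqP => h; move/eqP: cn1; apply; cc x' h.
have nxx : c*x != c*x' by apply/eqP => h; move/eqP: nx; apply; cc c h.
have key : c*x = x' \/ c*x' = x.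
  case: (eqVneq (c*x) x') => [|h]; first by left.
  right; have e1 : x != x' by rewrite eq_sym.
  have e2 : x != c*x by rewrite eq_sym.
  have e3 : x' != c*x by rewrite eq_sym.
  case: (pig Px Px' Pcx Pcx' e1 e2 e3) => // h'.
    by rewrite h' eqxx in ncx'.
  by rewrite h' eqxx in nxx.
case: (eqVneq c (-1)) => [cm1|cm1].
  have ex' : x' = - x.
    case: key; rewrite cm1 mulN1r => // <-; by rewrite opprK.
  have Pnx : P (-x) by rewrite -ex'.
  set K := (s*x)^+3.
  have Kn : K != 0 by rewrite expf_neq0 // mulf_neq0.
  have k0 : (s*x)^+3 = K by [].
  have k1 : (s*w*x)^+3 = K.
    have -> : (s*w*x)^+3 = (s*x)^+3*w^+3 by ring.
    by rewrite w3 mulr1.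
  have k2 : (s*w^+2*x')^+3 = - K.
    have -> : (s*w^+2*x')^+3 = - ((s*x)^+3*(w^+3)^+2) by rewrite ex'; ring.
    by rewrite w3 expr1n mulr1.
  have d10 : s*w*x != s*x by rewrite eq_sym.
  case hz0 : ((s*x != x) && (s*x != -x)).
    move/andP: hz0 => [h1 h2].
    have H := negsub Px Pnx Pz0 Pz1 Pz2 xn h1 h2 d10 k0 k1 k2 Kn.
    rewrite ex' in H; move/eqP: wnw2; apply; cc (-(s*x)) H.
  have h1 : s*w*x != x.
    apply/eqP => e1; move/negbT: hz0; rewrite negb_and !negbK => /orP[] /eqP e0.
      by rewrite e0 e1 eqxx in d01.
    by apply: (KnK Kn); rewrite -{1}k1 -k0 e1 e0; ring.
  have h2 : s*w*x != -x.
    apply/eqP => e1; move/negbT: hz0; rewrite negb_and !negbK => /orP[] /eqP e0.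
      by apply: (KnK Kn); rewrite -{1}k1 -k0 e1 e0; ring.
    by rewrite e0 e1 eqxx in d01.
  have H := negsub Px Pnx Pz1 Pz0 Pz2 xn h1 h2 d01 k1 k0 k2 Kn.
  rewrite ex' in H; move/eqP: w2n; apply; cc (-(s*x)) H.
case: key => hk.
  apply: (geo cn cn1 cm1 xn sn Px Pcx _ Pz0 Pz1 Pz2 _ c3).
    rewrite (_ : c^+2*x = c*(c*x)); last by ring.
    by rewrite hk.
  by left; split; rewrite ?hk.
apply: (geo cn cn1 cm1 x'n sn Px' Pcx' _ Pz0 Pz1 Pz2 _ c3).
  rewrite (_ : c^+2*x' = c*(c*x')); last by ring.
  by rewrite hk.
by right; split; rewrite ?hk.
Qed.

Lemma L1 c t x0 x1 x2 : P x0 -> P x1 -> P x2 -> P (c*x0) -> P (c*x1) -> P (c*x2) ->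
  P (t*x0) -> P (t*w*x1) -> P (t*w^+2*x2) -> c^+3 = 1.
Proof.
move=> P0 P1 P2 Pc0 Pc1 Pc2 Pt0 Pt1 Pt2.
case: (eqVneq x0 x1) => [e01|n01].
  apply: (L2 (s:=t) P0 P2 Pc0 Pc2 Pt0 _ Pt2); by rewrite e01.
case: (eqVneq x1 x2) => [e12|n12].
  apply: (L2 (s:=t*w) P1 P0 Pc1 Pc0 Pt1).
    by rewrite (_ : t*w*w*x1 = t*w^+2*x2) //; rewrite e12; ring.
  rewrite (_ : t*w*w^+2*x0 = t*w^+3*x0); last by ring.
  by rewrite w3 mulr1.
case: (eqVneq x0 x2) => [e02|n02].
  apply: (L2 (s:=t*w^+2) P0 P1 Pc0 Pc1).
  - by rewrite e02.
  - rewrite (_ : t*w^+2*w*x0 = t*w^+3*x0); last by ring.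
    by rewrite w3 mulr1.
  - rewrite (_ : t*w^+2*w^+2*x1 = t*w^+3*w*x1); last by ring.
    by rewrite w3 mulr1.
have x0n := Snz P0; have x1n := Snz P1; have x2n := Snz P2.
move: (Snz Pc0); rewrite mulf_eq0 negb_or => /andP[cn _].
case: (eqVneq c 1) => [->|cn1]; first by rewrite expr1n.
case: (pig P0 P1 P2 Pc0 n01 n02 n12) => h0;
case: (pig P0 P1 P2 Pc1 n01 n02 n12) => h1;
case: (pig P0 P1 P2 Pc2 n01 n02 n12) => h2;
first [ (have H : (c*x0)*(c*x1)*(c*x2) = x0*x1*x2 by rewrite h0 h1 h2; ring);
        cc (x0*x1*x2) H
      | exfalso; move/eqP: cn1; apply; first [cc x0 h0 | cc x1 h1 | cc x2 h2]
      | exfalso; move/eqP: n01; apply; cc c (etrans h0 (esym h1))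
      | exfalso; move/eqP: n02; apply; cc c (etrans h0 (esym h2))
      | exfalso; move/eqP: n12; apply; cc c (etrans h1 (esym h2)) ].
Qed.
End Main.

Lemma omega_eq (R : realType) : (omega R)^+2 + omega R + 1 = 0.
Proof.
rewrite /omega expr2.
apply/eqP; rewrite eq_complex /=.
have h3 : Num.sqrt (3%:R : R) * Num.sqrt 3%:R = 3%:R by rewrite -expr2 sqr_sqrtr // ler0n.
set s := Num.sqrt _ in h3 *.
apply/andP; split; apply/eqP.
- have -> : s / 2%:R * (s / 2%:R) = (s*s) / 4%:R by field.
  by rewrite h3; field.
- by field.
Qed.
Lemma omega_neq1 (R : realType) : omega R != 1.
Proof.
rewrite /omega eq_complex /=; apply/negP => /andP[/eqP h _].
have : (2 : R) * (- (1/2)) = 2 * 1 by rewrite h.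
rewrite mulrN mulr1 mul1r mulfV ?pnatr_eq0 //. lra.
Qed.


Section Mono.
Variable C : numClosedFieldType.
Variable n : nat.

Lemma mono_col (P : 'M[C]_n) : monomial_unitary P ->
  forall k, exists i, P i k != 0 /\ forall l, l != k -> P i l = 0.
Proof.
move=> [_ [hr [hc _]]] k.
have /cards1P[i hi] : #|[set i | P i k != 0]| == 1%N by rewrite hc.
have : i \in [set i | P i k != 0] by rewrite hi set11.
rewrite inE => pik.
exists i; split => // l lk; apply/eqP; apply/negPn/negP => pil.
have /cards1P[j hj] : #|[set j | P i j != 0]| == 1%N by rewrite hr.
have : k \in [set j | P i j != 0] by rewrite inE.
have : l \in [set j | P i j != 0] by rewrite inE.
rewrite hj !inE => /eqP el /eqP ek; by move: lk; rewrite el ek eqxx.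
Qed.

Lemma mono_row (Q : 'M[C]_n) : monomial_unitary Q ->
  forall l, exists j, Q l j != 0 /\ forall m, m != l -> Q m j = 0.
Proof.
move=> [_ [hr [hc _]]] l.
have /cards1P[j hj] : #|[set j | Q l j != 0]| == 1%N by rewrite hr.
have : j \in [set j | Q l j != 0] by rewrite hj set11.
rewrite inE => qlj.
exists j; split => // m ml; apply/eqP; apply/negPn/negP => qmj.
have /cards1P[i hi] : #|[set i | Q i j != 0]| == 1%N by rewrite hc.
have : l \in [set i | Q i j != 0] by rewrite inE.
have : m \in [set i | Q i j != 0] by rewrite inE.
rewrite hi !inE => /eqP el /eqP ek; by move: ml; rewrite el ek eqxx.
Qed.

Lemma entry (P A Q : 'M[C]_n) i k l j :
  (forall l', l' != k -> P i l' = 0) -> (forall m, m != l -> Q m j = 0) ->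
  (P *m A *m Q) i j = P i k * A k l * Q l j.
Proof.
move=> hP hQ; rewrite mxE (bigD1 l) //= big1 ?addr0; last first.
  by move=> m ml; rewrite hQ ?mulr0.
rewrite mxE (bigD1 k) //= big1 ?addr0 //.
by move=> m mk; rewrite hP ?mul0r.
Qed.
End Mono.

Lemma omega3 (R : realType) : (omega R)^+3 = 1.
Proof.
have -> : (omega R)^+3 = (omega R - 1)*((omega R)^+2 + omega R + 1) + 1 by ring.
by rewrite omega_eq mulr0 add0r.
Qed.

Lemma memeq (T : eqType) (s : seq T) u v : v \in s -> u = v -> u \in s.
Proof. by move=> h ->. Qed.

Definition o (k : nat) (h : (k < 6)%N) : 'I_6 := Ordinal h.

Lemma nz_of_norm (R : realType) (a : R[i]) : `|a| = 1 -> a != 0.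
Proof. by move=> h; apply/eqP => a0; move: h; rewrite a0 normr0 => /eqP; rewrite eq_sym oner_eq0. Qed.

Theorem mainTheorem3 (R : realType) (a b : R[i]) :
  `|a| = 1 -> `|b| = 1 ->
  ~ (exists (H : 'M[R[i]]_6) (al be : R[i]),
        CHM H /\
        (forall i j, H i j \in [:: 1; a; b]) /\
        `|al| = 1 /\ `|be| = 1 /\
        complex_equiv H (Hab (omega R) al be)).
Proof.
move=> ha hb [H [al [be [_ [Hin [hal [hbe [P [Q [hP [hQ eH]]]]]]]]]]].
have an := nz_of_norm ha; have bn := nz_of_norm hb.
set w := omega R.
have w3 : w^+3 = 1 by exact: omega3.
have w1 : w != 1 by exact: omega_neq1.
pose Hb := Hab w al be.
have ent : forall k l i j, (forall l', l' != k -> P i l' = 0) ->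
    (forall m, m != l -> Q m j = 0) -> P i k * Hb k l * Q l j \in [:: 1; a; b].
  by move=> k l i j h1 h2; rewrite -(entry _ h1 h2) -eH; exact: Hin.
have [i0 [p0n r0]] := mono_col hP (o (isT : (0 < 6)%N)).
have [i1 [p1n r1]] := mono_col hP (o (isT : (1 < 6)%N)).
have [i2 [p2n r2]] := mono_col hP (o (isT : (2 < 6)%N)).
have [j0 [q0n c0]] := mono_row hQ (o (isT : (0 < 6)%N)).
have [j1 [q1n c1]] := mono_row hQ (o (isT : (1 < 6)%N)).
have [j2 [q2n c2]] := mono_row hQ (o (isT : (2 < 6)%N)).
have [j3 [q3n c3]] := mono_row hQ (o (isT : (3 < 6)%N)).
have [j4 [q4n c4]] := mono_row hQ (o (isT : (4 < 6)%N)).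
have [j5 [q5n c5]] := mono_row hQ (o (isT : (5 < 6)%N)).
have m00 := ent _ _ _ _ r0 c0; rewrite /Hb /Hab mxE /= in m00.
have m01 := ent _ _ _ _ r0 c1; rewrite /Hb /Hab mxE /= in m01.
have m02 := ent _ _ _ _ r0 c2; rewrite /Hb /Hab mxE /= in m02.
have m03 := ent _ _ _ _ r0 c3; rewrite /Hb /Hab mxE /= in m03.
have m04 := ent _ _ _ _ r0 c4; rewrite /Hb /Hab mxE /= in m04.
have m05 := ent _ _ _ _ r0 c5; rewrite /Hb /Hab mxE /= in m05.
have m10 := ent _ _ _ _ r1 c0; rewrite /Hb /Hab mxE /= in m10.
have m11 := ent _ _ _ _ r1 c1; rewrite /Hb /Hab mxE /= in m11.
have m12 := ent _ _ _ _ r1 c2; rewrite /Hb /Hab mxE /= in m12.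
have m13 := ent _ _ _ _ r1 c3; rewrite /Hb /Hab mxE /= in m13.
have m14 := ent _ _ _ _ r1 c4; rewrite /Hb /Hab mxE /= in m14.
have m15 := ent _ _ _ _ r1 c5; rewrite /Hb /Hab mxE /= in m15.
have m20 := ent _ _ _ _ r2 c0; rewrite /Hb /Hab mxE /= in m20.
have m21 := ent _ _ _ _ r2 c1; rewrite /Hb /Hab mxE /= in m21.
have m22 := ent _ _ _ _ r2 c2; rewrite /Hb /Hab mxE /= in m22.
have m23 := ent _ _ _ _ r2 c3; rewrite /Hb /Hab mxE /= in m23.
have m24 := ent _ _ _ _ r2 c4; rewrite /Hb /Hab mxE /= in m24.
have m25 := ent _ _ _ _ r2 c5; rewrite /Hb /Hab mxE /= in m25.
set p0 := P i0 _ in p0n m00 m01 m02 m03 m04 m05; set p1 := P i1 _ in p1n m10 m11 m12 m13 m14 m15; set p2 := P i2 _ in p2n m20 m21 m22 m23 m24 m25.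
set q0 := Q _ j0 in q0n m00 m10 m20; set q1 := Q _ j1 in q1n m01 m11 m21; set q2 := Q _ j2 in q2n m02 m12 m22.
set q3 := Q _ j3 in q3n m03 m13 m23; set q4 := Q _ j4 in q4n m04 m14 m24; set q5 := Q _ j5 in q5n m05 m15 m25.
have L := L1 an bn w3 w1 (c := p1/p0) (t := p2/p0) (x0 := p0*q0) (x1 := p0*q1) (x2 := p0*q2).
have R' := L1 an bn w3 w1 (c := -(p1/p0)) (t := p2*al/p0) (x0 := p0*q3) (x1 := p0*q4) (x2 := p0*q5).
have hc : (p1/p0)^+3 = 1.
  apply: L; [apply: (memeq m00)|apply: (memeq m01)|apply: (memeq m02)
    |apply: (memeq m10)|apply: (memeq m11)|apply: (memeq m12)
    |apply: (memeq m20)|apply: (memeq m21)|apply: (memeq m22)]; by field.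
have hc' : (-(p1/p0))^+3 = 1.
  apply: R'; [apply: (memeq m03)|apply: (memeq m04)|apply: (memeq m05)
    |apply: (memeq m13)|apply: (memeq m14)|apply: (memeq m15)
    |apply: (memeq m23)|apply: (memeq m24)|apply: (memeq m25)]; by field.
have h1 : (1 : R[i]) = -1 by rewrite -{1}hc' -hc; ring.
by move: (neqN (oner_neq0 R[i])); rewrite -h1 eqxx.
Qed.
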